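(* Let $\kappa\ge1$, $n\ge1$ be integers and $0<\epsilon<1$. Let $\mathcal{C}=\{q\in\mathbb{R}^{2^\kappa}: q_i\ge0\ \forall i,\ \sum_{i=0}^{2^\kappa-1}q_i=1\}$. If $q\in\mathcal{C}$ is a local minimizer of $q\mapsto l(n,\epsilon,q)$ on $\mathcal{C}$, then $q_0=0$.
   Context: $W=\mathbb{F}_2^\kappa$; $\nu(i)\in W$ is the binary expansion of $i\in\{0,\dots,2^\kappa-1\}$; vectors $q\in\mathbb{R}^{2^\kappa}$ are indexed $q_0,\dots,q_{2^\kappa-1}$. For a subspace $S\subseteq W$, $\zeta(S,q)=\sum_{i:\nu(i)\in S}q_i$; $\Xi(W,d)$ is the set of $d$-dimensional subspaces of $W$. For real $q$, the (continuous) expected equivocation loss is $l(n,\epsilon,q)=n(1-\epsilon)-\kappa+\sum_{\delta=1}^{\kappa}K_\delta\sum_{S\in\Xi(W,\kappa-\delta)}\epsilon^{n(1-\zeta(S,q))}$, with $K_\delta=\prod_{i=1}^{\delta-1}(1-2^i)$. (When $q$ is the column-distribution vector of a $\kappa\times n$ generator matrix $G$, i.e. $q_i$ is the fraction of columns of $G$ equal to $\nu(i)$, this is the expected equivocation loss of the corresponding coset code over a binary erasure channel with erasure probability $\epsilon$.) A local minimizer of $f$ on $\mathcal{C}$ is a point $q\in\mathcal{C}$ with $f(q)\le f(q')$ for all $q'\in\mathcal{C}$ in some neighborhood of $q$. *)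

(* Defs.v *)
From HB Require Import structures.
From mathcomp Require Import all_boot all_order all_algebra.
From mathcomp Require Import reals exp.
Set Implicit Arguments. Unset Strict Implicit. Unset Printing Implicit Defensive.
Import Order.TTheory GRing.Theory Num.Theory.
Local Open Scope ring_scope.

Definition W (kappa : nat) := 'rV['F_2]_kappa.

(* nu(i) : binary expansion of i; coordinate j is the j-th bit of i *)
Definition nu (kappa : nat) (i : nat) : W kappa :=
  \row_(j < kappa) ((odd (i %/ 2 ^ j))%:R : 'F_2).

Definition is_subspace (kappa : nat) (S : {set W kappa}) : bool :=
  (0 \in S) && [forall a : 'F_2, forall x in S, forall y in S, (a *: x + y) \in S].

(* Xi(W,d): subspaces of dimension d; over F_2 dim S = d iff #|S| = 2^d *)
Definition Xi (kappa d : nat) : pred {set W kappa} :=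
  fun S => is_subspace S && (#|S| == 2 ^ d)%N.

Definition zeta (R : realType) (kappa : nat) (S : {set W kappa})
  (q : 'I_(2 ^ kappa) -> R) : R :=
  \sum_(i < 2 ^ kappa | nu kappa i \in S) q i.

Definition Kd (R : realType) (delta : nat) : R :=
  \prod_(1 <= i < delta) (1 - 2 ^+ i).

Definition loss (R : realType) (kappa n : nat) (eps : R)
  (q : 'I_(2 ^ kappa) -> R) : R :=
  n%:R * (1 - eps) - kappa%:R +
  \sum_(1 <= delta < kappa.+1)
     Kd R delta * \sum_(S : {set W kappa} | Xi (kappa - delta) S)
                    powR eps (n%:R * (1 - zeta S q)).

Definition inC (R : realType) (kappa : nat) (q : 'I_(2 ^ kappa) -> R) : Prop :=
  (forall i, 0 <= q i) /\ \sum_(i < 2 ^ kappa) q i = 1.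

Definition local_min_on_C (R : realType) (kappa : nat)
  (f : ('I_(2 ^ kappa) -> R) -> R) (q : 'I_(2 ^ kappa) -> R) : Prop :=
  inC q /\ exists e : R, 0 < e /\
    forall q', inC q' -> (forall i, `|q' i - q i| < e) -> f q <= f q'.

(* Main.v *)
Require Import Defs.
From HB Require Import structures.
From mathcomp Require Import all_boot all_order all_algebra.
From mathcomp Require Import reals exp.
From mathcomp Require Import zify ring lra.
Set Implicit Arguments. Unset Strict Implicit. Unset Printing Implicit Defensive.
Import Order.TTheory GRing.Theory Num.Theory.
Local Open Scope ring_scope.

Lemma F2_cases (a : 'F_2) : a = 0 \/ a = 1.
Proof. case: a => -[|[|k]] Hk /=; [left|right|]; try exact: val_inj. by []. Qed.

Lemma addxx k (x : W k) : x + x = 0.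
Proof.
have -> : x + x = (1 + 1 : 'F_2) *: x by rewrite scalerDl scale1r.
have -> : (1 + 1 : 'F_2) = 0 by apply: val_inj.
by rewrite scale0r.
Qed.

Lemma sub0 k (S : {set W k}) : is_subspace S -> 0 \in S.
Proof. by case/andP. Qed.

Lemma subD k (S : {set W k}) x y : is_subspace S -> x \in S -> y \in S -> x + y \in S.
Proof.
case/andP=> _ /forallP /(_ 1) /forall_inP H xS yS.
by have := forall_inP (H x xS) y yS; rewrite scale1r.
Qed.

Lemma subspaceI k (S : {set W k}) :
  0 \in S -> (forall x y, x \in S -> y \in S -> x + y \in S) -> is_subspace S.
Proof.
move=> S0 SD; apply/andP; split=> //.
apply/forallP=> a; apply/forall_inP=> x xS; apply/forall_inP=> y yS.
by case: (F2_cases a) => ->; rewrite ?scale0r ?add0r ?scale1r //; apply: SD.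
Qed.

Definition ext k (A : {set W k}) (z : W k) : {set W k} :=
  A :|: [set z + a | a in A].

Lemma ext_subspace k (A : {set W k}) z : is_subspace A -> is_subspace (ext A z).
Proof.
move=> sA; apply: subspaceI; first by rewrite inE sub0.
move=> x y; rewrite !inE => /orP[xA|/imsetP[a aA ->]] /orP[yA|/imsetP[b bA ->]].
- by rewrite subD.
- apply/orP; right; apply/imsetP; exists (x + b); first by rewrite subD.
  by rewrite addrCA.
- apply/orP; right; apply/imsetP; exists (a + y); first by rewrite subD.
  by rewrite addrA.
- apply/orP; left. have -> : z + a + (z + b) = a + b.
    by rewrite addrACA addxx add0r.
  by rewrite subD.
Qed.

Lemma ext_sub k (A : {set W k}) z : A \subset ext A z.
Proof. by apply/subsetP=> x xA; rewrite inE xA. Qed.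

Lemma ext_in k (A : {set W k}) z : is_subspace A -> z \in ext A z.
Proof. move=> sA; rewrite inE; apply/orP; right; apply/imsetP; exists 0; rewrite ?sub0 ?addr0 //. Qed.

Lemma card_ext k (A : {set W k}) z : is_subspace A -> z \notin A ->
  #|ext A z| = (2 * #|A|)%N.
Proof.
move=> sA zA; rewrite /ext cardsU.
have -> : A :&: [set z + a | a in A] = set0.
  apply/setP=> x; rewrite !inE; apply/negbTE; apply/negP=> /andP[xA /imsetP[a aA xe]].
  have zx : z = x + a by rewrite xe -addrA addxx addr0.
  by move: zA; rewrite zx subD.
rewrite cards0 subn0 card_imset; last exact: addrI.
by rewrite mul2n addnn.
Qed.

Lemma ext_subset k (A S : {set W k}) z : is_subspace A -> is_subspace S ->
  (ext A z \subset S) = (A \subset S) && (z \in S).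
Proof.
move=> sA sS; apply/idP/andP.
  move=> H; split; first exact: subset_trans (ext_sub A z) H.
  by apply: (subsetP H); apply: ext_in.
case=> AS zS; apply/subsetP=> x; rewrite inE => /orP[xA|/imsetP[a aA ->]].
  exact: (subsetP AS).
by apply: subD => //; apply: (subsetP AS).
Qed.

Lemma add_eq0 k (x y : W k) : x + y = 0 -> x = y.
Proof. by move=> h; rewrite -[x]addr0 -(addxx y) addrA h add0r. Qed.

Definition sumset k (U D : {set W k}) : {set W k} :=
  [set x.1 + x.2 | x in setX U D].

Lemma mem_sumset k (U D : {set W k}) u t : u \in U -> t \in D -> u + t \in sumset U D.
Proof. by move=> uU tD; apply/imsetP; exists (u, t); rewrite ?inE ?uU. Qed.

Lemma card_W k : #|[set: W k]| = (2 ^ k)%N.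
Proof. by rewrite cardsT card_mx card_Fp // mul1n. Qed.

Lemma card_sumset k (U D : {set W k}) : is_subspace U -> is_subspace D ->
  (forall x, x \in U -> x \in D -> x = 0) -> #|sumset U D| = (#|U| * #|D|)%N.
Proof.
move=> sU sD hUD; rewrite /sumset card_in_imset ?cardsX //.
move=> [u1 t1] [u2 t2]; rewrite !inE /= => /andP[u1U t1D] /andP[u2U t2D] e.
have h : u1 + u2 = t1 + t2.
  by apply: add_eq0; rewrite addrACA e addxx.
have h0 : u1 + u2 = 0 by apply: hUD; [apply: subD | rewrite h; apply: subD].
have -> : u1 = u2 by apply: add_eq0.
by rewrite (add_eq0 (etrans (esym h) h0)).
Qed.

Lemma card_sumset_le k (U D : {set W k}) : is_subspace U -> is_subspace D ->
  (forall x, x \in U -> x \in D -> x = 0) -> (#|U| * #|D| <= 2 ^ k)%N.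
Proof. move=> *; rewrite -card_sumset // -card_W; exact: subset_leq_card (subsetT _). Qed.

Lemma card_sub_gt0 k (U : {set W k}) : is_subspace U -> (0 < #|U|)%N.
Proof. by move=> sU; apply/card_gt0P; exists 0; apply: sub0. Qed.

Definition cc (R : realType) k (S : {set W k}) : R :=
  \sum_(1 <= d < k.+1) Kd R d * (Xi (k - d) S)%:R.

Lemma cc_nsub (R : realType) k (S : {set W k}) : ~~ is_subspace S -> cc R S = 0.
Proof.
move=> h; rewrite /cc big1 // => d _; rewrite /Xi.
by rewrite (negbTE h) /= mulr0.
Qed.

Definition good k (U D S : {set W k}) : bool :=
  (U \subset S) && (S :&: D \subset [set 0]).

Lemma sum_single (R : realType) (F : nat -> R) (a b d : nat) :
  (a <= d < b)%N -> \sum_(a <= i < b) (if i == d then F i else 0) = F d.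
Proof.
move=> hd; rewrite (bigD1_seq d) ?mem_index_iota ?iota_uniq //= eqxx.
by rewrite big1 ?addr0 // => i /negbTE ->.
Qed.

Lemma cc_card (R : realType) k (U : {set W k}) d : is_subspace U ->
  (#|U| * 2 ^ d = 2 ^ k)%N -> (1 <= d)%N -> cc R U = Kd R d.
Proof.
move=> sU hU hd.
have U0 := card_sub_gt0 sU.
have dk : (d <= k)%N.
  rewrite -(@leq_exp2l 2) //; rewrite -hU; apply: leq_pmull.
  done.
have hU' : #|U| = (2 ^ (k - d))%N.
  apply/eqP; rewrite -(@eqn_pmul2r (2 ^ d)) ?expn_gt0 //.
  by rewrite -expnD subnK // hU.
rewrite /cc -(@sum_single R (Kd R) 1 k.+1 d); last by rewrite hd ltnS.
apply: eq_big_nat => i /andP[i1 ik]; rewrite /Xi sU hU' /= eqn_exp2l //.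
have -> : (k - d == k - i)%N = (i == d).
  apply/eqP/eqP; last by move->.
  rewrite ltnS in ik; lia.
by case: (i == d); rewrite ?mulr1 ?mulr0.
Qed.

Lemma base_case (R : realType) k (U D : {set W k}) d :
  is_subspace U -> is_subspace D -> (forall x, x \in U -> x \in D -> x = 0) ->
  #|D| = (2 ^ d)%N -> (1 <= d)%N -> (#|U| * #|D| = 2 ^ k)%N ->
  \sum_(S : {set W k}) cc R S * (good U D S)%:R = Kd R d.
Proof.
move=> sU sD hUD hD hd hk.
have hT : sumset U D = setT.
  apply/eqP; rewrite eqEcard subsetT card_W card_sumset //=.
  by rewrite hk.
have eqU : forall S, is_subspace S -> good U D S -> S = U.
  move=> S sS /andP[US SD]; apply/setP=> x; apply/idP/idP; last exact: (subsetP US).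
  move=> xS; have : x \in sumset U D by rewrite hT inE.
  case/imsetP=> -[u t]; rewrite inE /= => /andP[uU tD] xe.
  have tS : t \in S.
    have -> : t = x + u by rewrite xe addrC addrA addxx add0r.
    by apply: subD => //; apply: (subsetP US).
  have : t \in [set 0] by apply: (subsetP SD); rewrite inE tS.
  by rewrite inE => /eqP t0; rewrite xe t0 addr0.
rewrite (bigD1 U) //= big1 ?addr0.
  have -> : good U D U.
    rewrite /good subxx /=; apply/subsetP=> x; rewrite !inE => /andP[xU xD].
    by rewrite (hUD x xU xD).
  by rewrite mulr1; apply: cc_card => //; rewrite -hD.
move=> S SU; case: (boolP (is_subspace S)) => sS; last by rewrite cc_nsub ?mul0r.
case: (boolP (good U D S)) => g; last by rewrite mulr0.
by move: SU; rewrite (eqU S sS g) eqxx.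
Qed.

Lemma good_split k (U D S : {set W k}) w :
  is_subspace U -> is_subspace D -> is_subspace S -> w \notin sumset U D ->
  (good U D S : nat) =
  (good U (ext D w) S + \sum_(t in D) (good (ext U (w + t)%R) D S : nat))%N.
Proof.
move=> sU sD sS wn.
have wD : w \notin D.
  by apply: contra wn => wD; rewrite -[w]add0r; apply: mem_sumset => //; apply: sub0.
have eg : forall t, good (ext U (w + t)) D S = (U \subset S) && (w + t \in S) && (S :&: D \subset [set 0]).
  by move=> t; rewrite /good ext_subset.
under eq_bigr => t _ do rewrite eg.
rewrite /good.
case US : (U \subset S) => /=; last by rewrite big1.
case SD : (S :&: D \subset [set 0]) => /=; last first.
  rewrite big1; last by move=> t _; rewrite andbF.
  case h : (S :&: ext D w \subset [set 0]) => //.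
  by move: SD; rewrite (subset_trans _ h) // setIS // ext_sub.
case: (boolP [exists t in D, w + t \in S]).
  case/exists_inP=> t0 t0D t0S.
  have -> : (S :&: ext D w \subset [set 0]) = false.
    apply/negbTE/negP=> /subsetP /(_ (w + t0)); rewrite in_setI t0S /=.
    have -> : w + t0 \in ext D w by rewrite inE; apply/orP; right; apply/imsetP; exists t0.
    move=> /(_ isT); rewrite inE => /eqP h; move: wD; by rewrite (add_eq0 h) t0D.
  rewrite (bigD1 t0) //= t0S big1 // => t /andP[tD tt0]; rewrite andbT.
  apply/eqP; rewrite eqb0; apply/negP => tS.
  have : t + t0 \in S :&: D.
    have e1 : t + t0 = (w + t) + (w + t0) by rewrite addrACA addxx add0r.
    rewrite inE; apply/andP; split; first by rewrite e1; apply: subD.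
    by apply: subD.
  move/(subsetP SD); rewrite inE => /eqP /add_eq0 e; by rewrite e eqxx in tt0.
move=> /exists_inPn hn; rewrite big1 ?andbT; last by move=> t tD; rewrite andbT (negbTE (hn t tD)).
have -> : (S :&: ext D w \subset [set 0]) = true; last by [].
apply/subsetP=> x; rewrite !inE => /andP[xS /orP[xD|/imsetP[a aD xe]]].
  by have := subsetP SD x; rewrite !inE xS xD; apply.
by move: (hn a aD); rewrite -xe xS.
Qed.

Lemma Kd_succ (R : realType) d : (1 <= d)%N -> Kd R d.+1 = Kd R d * (1 - 2 ^+ d).
Proof. by move=> hd; rewrite /Kd big_nat_recr. Qed.

Lemma step_case (R : realType) k (U D : {set W k}) d w :
  is_subspace U -> is_subspace D -> #|D| = (2 ^ d)%N -> (1 <= d)%N ->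
  w \notin sumset U D ->
  \sum_(S : {set W k}) cc R S * (good U (ext D w) S)%:R = Kd R d.+1 ->
  (forall t, t \in D -> \sum_(S : {set W k}) cc R S * (good (ext U (w + t)) D S)%:R = Kd R d) ->
  \sum_(S : {set W k}) cc R S * (good U D S)%:R = Kd R d.
Proof.
move=> sU sD hD hd wn h1 h2.
have e : forall S : {set W k}, cc R S * (good U D S)%:R =
   cc R S * (good U (ext D w) S)%:R + \sum_(t in D) cc R S * (good (ext U (w + t)) D S)%:R.
  move=> S; case: (boolP (is_subspace S)) => sS; last first.
    by rewrite cc_nsub // !mul0r add0r big1 // => t _; rewrite mul0r.
  by rewrite (good_split sU sD sS wn) natrD natr_sum mulrDr mulr_sumr.
under eq_bigr => S _ do rewrite e.
rewrite big_split /= h1 exchange_big /=.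
rewrite (eq_bigr (fun _ => Kd R d)); last by move=> t tD; rewrite h2.
rewrite sumr_const hD Kd_succ // -natrX; ring.
Qed.

Lemma core (R : realType) k (N : nat) : forall (U D : {set W k}) d,
  (2 ^ k - #|U| * #|D| <= N)%N -> is_subspace U -> is_subspace D ->
  (forall x, x \in U -> x \in D -> x = 0) -> #|D| = (2 ^ d)%N -> (1 <= d)%N ->
  \sum_(S : {set W k}) cc R S * (good U D S)%:R = Kd R d.
Proof.
elim: N => [|N IH] U D d hN sU sD hUD hD hd.
  apply: base_case => //.
  have := card_sumset_le sU sD hUD; lia.
have hle := card_sumset_le sU sD hUD.
case: (ltnP (#|U| * #|D|) (2 ^ k)) => lt; last first.
  by apply: base_case => //; lia.
have : ~~ (setT \subset sumset U D).
  apply/negP=> /subset_leq_card; rewrite card_W card_sumset //; lia.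
case/subsetPn => w _ wn.
have U0 := card_sub_gt0 sU; have D0 := card_sub_gt0 sD.
have wD : w \notin D.
  by apply: contra wn => wD; rewrite -[w]add0r; apply: mem_sumset => //; apply: sub0.
apply: (step_case sU sD hD hd wn).
  have sD' := ext_subspace w sD.
  have hUD' : forall x, x \in U -> x \in ext D w -> x = 0.
    move=> x xU; rewrite inE => /orP[xD|/imsetP[a aD xe]]; first exact: hUD.
    move: wn; have -> : w = x + a by rewrite xe -addrA addxx addr0.
    by rewrite mem_sumset.
  apply: IH => //; last by rewrite card_ext // hD expnS.
  rewrite card_ext //; lia.
move=> t tD.
have wtU : w + t \notin U.
  apply: contra wn => h; have -> : w = (w + t) + t by rewrite -addrA addxx addr0.
  exact: mem_sumset.
have sU' := ext_subspace (w + t) sU.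
have hUD' : forall x, x \in ext U (w + t) -> x \in D -> x = 0.
  move=> x; rewrite inE => /orP[xU|/imsetP[a aU xe]] xD; first exact: hUD.
  move: wn; have -> : w = a + (x + t) by rewrite xe [w + t + a]addrC -!addrA addxx addr0 addrA addxx add0r.
  by rewrite mem_sumset // subD.
apply: IH => //.
rewrite card_ext //; lia.
Qed.

Definition span k (A : {set W k}) : {set W k} :=
  \bigcap_(S | is_subspace S && (A \subset S)) S.

Lemma span_subspace k (A : {set W k}) : is_subspace (span A).
Proof.
apply: subspaceI; first by apply/bigcapP=> S /andP[sS _]; apply: sub0.
move=> x y /bigcapP hx /bigcapP hy; apply/bigcapP=> S hS.
by apply: subD (hx S hS) (hy S hS); case/andP: hS.
Qed.

Lemma span_min k (A S : {set W k}) : is_subspace S -> A \subset S -> span A \subset S.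
Proof. by move=> sS AS; apply: bigcap_inf; rewrite sS. Qed.

Lemma sub_span k (A : {set W k}) : A \subset span A.
Proof. by apply/bigcapsP=> S /andP[]. Qed.

Lemma zero_subspace k : is_subspace [set 0 : W k].
Proof. by apply: subspaceI; rewrite ?inE // => x y; rewrite !inE => /eqP -> /eqP ->; rewrite addr0. Qed.

Definition beta (R : realType) k (A : {set W k}) (v : W k) : R :=
  \sum_(S : {set W k}) cc R S * ((A \subset S) && (v \notin S))%:R.

Lemma beta_val (R : realType) k (A : {set W k}) (v : W k) : v != 0 ->
  beta R A v = if v \in span A then 0 else 1.
Proof.
move=> v0; rewrite /beta; case: ifP => vA.
  rewrite big1 // => S _; case: (boolP (is_subspace S)) => sS; last by rewrite cc_nsub ?mul0r.
  case: (boolP (A \subset S)) => AS; last by rewrite mulr0.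
  by rewrite (subsetP (span_min sS AS) v vA) mulr0.
set D0 := ext [set 0] v.
have sD0 : is_subspace D0 by apply: ext_subspace; apply: zero_subspace.
have v0' : v \notin [set 0 : W k] by rewrite inE.
have cD0 : #|D0| = (2 ^ 1)%N by rewrite card_ext ?zero_subspace // cards1.
have hUD : forall x, x \in span A -> x \in D0 -> x = 0.
  move=> x xA; rewrite inE => /orP[|/imsetP[a]]; first by rewrite inE => /eqP.
  by rewrite inE => /eqP -> xe; move: vA; rewrite -[v]addr0 -xe xA.
have := @core R k (2 ^ k) (span A) D0 1 (leq_subr _ _) (span_subspace A) sD0 hUD cD0 isT.
rewrite /Kd big_geq // => h; apply: eq_trans h; apply: eq_bigr => S _.
case: (boolP (is_subspace S)) => sS; last by rewrite !cc_nsub ?mul0r.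
congr (_ * _%:R); rewrite /good.
have -> : (span A \subset S) = (A \subset S).
  apply/idP/idP; first by apply: subset_trans; apply: sub_span.
  exact: span_min.
congr (_ && _); apply/idP/idP.
  move=> vS; apply/subsetP=> x; rewrite !inE => /andP[xS /orP[//|/imsetP[a]]].
  by rewrite inE => /eqP -> xe; move: vS; rewrite -[v]addr0 -xe xS.
apply: contraL => vS; apply/subsetPn; exists v; first by rewrite inE vS ext_in ?zero_subspace.
by rewrite inE.
Qed.

Lemma powR_sum (R : realType) (a : R) (I : finType) (P : pred I) (x : I -> R) :
  0 < a -> powR a (\sum_(j | P j) x j) = \prod_(j | P j) powR a (x j).
Proof.
move=> a0; elim/big_rec2: _ => [|j y1 y2 _ <-]; first exact: powRr0.
by rewrite powRD // (lt0r_neq0 a0) implybT.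
Qed.

Lemma sum_ifeq (R : realType) (I : finType) (P : pred I) (a : I) (x : R) :
  \sum_(j | P j) (if j == a then x else 0) = if P a then x else 0.
Proof.
rewrite big_mkcond /= (bigD1 a) //= eqxx big1 ?addr0 // => j /negbTE ->.
by case: (P j).
Qed.

Lemma loss_cc (R : realType) k n (eps : R) (p : 'I_(2 ^ k) -> R) :
  @loss R k n eps p = n%:R * (1 - eps) - k%:R +
    \sum_(S : {set W k}) cc R S * powR eps (n%:R * (1 - zeta S p)).
Proof.
rewrite /loss /cc; congr (_ + _).
under eq_bigr => d _ do rewrite big_mkcond mulr_sumr /=.
rewrite exchange_big /=; apply: eq_bigr => S _; rewrite mulr_suml.
by apply: eq_bigr => d _; case: (Xi (k - d) S); rewrite ?mulr1 ?mulr0 ?mul0r.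
Qed.

Definition Aset k (f : {ffun 'I_(2 ^ k) -> bool}) : {set W k} :=
  [set x | [exists j, f j && (nu k j == x)]].

Lemma Aset_sub k (f : {ffun 'I_(2 ^ k) -> bool}) (S : {set W k}) :
  (Aset f \subset S) = [forall j, f j ==> (nu k j \in S)].
Proof.
apply/subsetP/forallP.
  move=> h j; apply/implyP=> fj; apply: h; rewrite inE; apply/existsP; exists j.
  by rewrite fj eqxx.
move=> h x; rewrite inE => /existsP[j /andP[fj /eqP <-]].
by have := h j; rewrite fj.
Qed.

Lemma expand (R : realType) k (a : 'I_(2 ^ k) -> R) (S : {set W k}) :
  \prod_(j : 'I_(2 ^ k) | nu k j \notin S) a j =
  \sum_(f : {ffun 'I_(2 ^ k) -> bool})
     (\prod_j (if f j then 1 - a j else a j)) * (Aset f \subset S)%:R.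
Proof.
rewrite big_mkcond /=.
have e : forall j : 'I_(2 ^ k), (if nu k j \notin S then a j else 1) =
   \sum_(b : bool) (if b then (if nu k j \in S then 1 - a j else 0) else a j).
  move=> j; rewrite big_bool /=; case: (nu k j \in S) => /=; last by rewrite add0r.
  by rewrite subrK.
under eq_bigr => j _ do rewrite e.
rewrite bigA_distr_bigA /=; apply: eq_bigr => f _.
rewrite Aset_sub; case: (boolP [forall j, f j ==> (nu k j \in S)]) => h.
  rewrite mulr1; apply: eq_bigr => j _; case fj: (f j) => //.
  by move: (forallP h j); rewrite fj /= => ->.
rewrite mulr0; case/forallPn: h => j; rewrite negb_imply => /andP[fj njS].
by rewrite (bigD1 j) //= fj (negbTE njS) mul0r.
Qed.

Unset Implicit Arguments.

Theorem theorem2 (R : realType) (kappa n : nat) (eps : R)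
  (hkappa : (1 <= kappa)%N) (hn : (1 <= n)%N)
  (heps0 : 0 < eps) (heps1 : eps < 1)
  (q : 'I_(2 ^ kappa) -> R) :
  @local_min_on_C R kappa (fun p => @loss R kappa n eps p) q ->
  forall i : 'I_(2 ^ kappa), nat_of_ord i = 0%N -> q i = 0.
Proof.
move=> [[hq0 hq1] [e [e0 He]]] i i0.
set v := nu kappa 1.
have v0 : v != 0.
  apply/eqP => /rowP /(_ (Ordinal hkappa)); rewrite !mxE /=.
  by move/eqP; rewrite oner_eq0.
have nu_i : nu kappa i = 0.
  by apply/rowP => j; rewrite !mxE i0 div0n.
apply/eqP; rewrite eq_le hq0 andbT leNgt; apply/negP => qpos.
have i1lt : (1 < 2 ^ kappa)%N by rewrite -{1}(expn0 2) ltn_exp2l.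
pose i1 := Ordinal i1lt.
have ii1 : i != i1 by apply/eqP => /(congr1 val); rewrite /= i0.
pose t := Num.min (q i) (e / 2).
have t0 : 0 < t by rewrite lt_min qpos divr_gt0.
have tq : t <= q i by rewrite ge_min lexx.
have te : t < e.
  apply: (le_lt_trans (y := e / 2)); first by rewrite ge_min lexx orbT.
  lra.
pose q' := fun j => q j - (if j == i then t else 0) + (if j == i1 then t else 0).
have Cq' : inC q'.
  split.
    move=> j; rewrite /q'; case: (eqVneq j i) => [->|ji].
      by rewrite (negbTE ii1) addr0 subr_ge0.
    by rewrite subr0; apply: addr_ge0 => //; case: ifP => // _; apply: ltW.
  rewrite /q' big_split sumrB /= hq1.
  rewrite (sum_ifeq (fun _ => true)) (sum_ifeq (fun _ => true)) /=; ring.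
have near : forall j, `|q' j - q j| < e.
  move=> j; have -> : q' j - q j = (if j == i1 then t else 0) - (if j == i then t else 0).
    by rewrite /q'; ring.
  case ji1 : (j == i1); case ji : (j == i).
  - by move: ii1; rewrite -(eqP ji) ji1.
  - by rewrite subr0 gtr0_norm.
  - by rewrite sub0r normrN gtr0_norm.
  - by rewrite subrr normr0.
have := He q' Cq' near; rewrite !loss_cc.
pose E := powR eps (n%:R * t).
pose f (p : 'I_(2 ^ kappa) -> R) (S : {set W kappa}) := powR eps (n%:R * (1 - zeta S p)).
have key : forall S, cc R S * f q' S = cc R S * f q S + (E - 1) * (cc R S * (v \notin S)%:R * f q S).
  move=> S; case: (boolP (is_subspace S)) => sS; last by rewrite cc_nsub // !mul0r mulr0 addr0.
  have iS : nu kappa i \in S by rewrite nu_i sub0.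
  have hz : zeta S q' = zeta S q - t + (if v \in S then t else 0).
    by rewrite /zeta /q' big_split sumrB /= !sum_ifeq iS.
  rewrite /f hz; case: (boolP (v \in S)) => vS /=.
    rewrite mulr0 mul0r mulr0 addr0; congr (_ * powR _ _); ring.
  have -> : n%:R * (1 - (zeta S q - t + 0)) = n%:R * (1 - zeta S q) + n%:R * t by ring.
  rewrite powRD; last by rewrite (lt0r_neq0 heps0) implybT.
  rewrite /E; ring.
pose B := \sum_(S : {set W kappa}) cc R S * (v \notin S)%:R * f q S.
have hsum : \sum_(S : {set W kappa}) cc R S * f q' S = \sum_(S : {set W kappa}) cc R S * f q S + (E - 1) * B.
  by rewrite /B mulr_sumr -big_split; apply: eq_bigr => S _; apply: key.
have E1 : E < 1.
  rewrite /E /powR (gt_eqF heps0) expR_lt1 pmulr_rlt0 ?ln_lt0 ?heps0 ?heps1 //.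
  by apply: mulr_gt0 => //; rewrite ltr0n.
pose a j := powR eps (n%:R * q j).
have ha : forall j, 0 <= a j <= 1.
  move=> j; rewrite powR_ge0 /= -(powRr0 eps) /a; apply: ger_powR.
    by rewrite heps0 ltW.
  by apply: mulr_ge0 => //; rewrite ler0n.
have fprod : forall S, f q S = \prod_(j : 'I_(2 ^ kappa) | nu kappa j \notin S) a j.
  move=> S; rewrite /f.
  have -> : 1 - zeta S q = \sum_(j : 'I_(2 ^ kappa) | nu kappa j \notin S) q j.
    by rewrite -hq1 (bigID (fun j : 'I_(2 ^ kappa) => nu kappa j \in S)) /= /zeta; ring.
  by rewrite mulr_sumr powR_sum.
have hB : B = \sum_(F : {ffun 'I_(2 ^ kappa) -> bool})
    (\prod_j (if F j then 1 - a j else a j)) * beta R (Aset F) v.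
  rewrite /B; under eq_bigr => S _ do rewrite fprod expand mulr_sumr.
  rewrite exchange_big; apply: eq_bigr => F _; rewrite /beta mulr_sumr.
  apply: eq_bigr => S _.
  by case: (Aset F \subset S); case: (v \in S); rewrite /= ?mulr1n ?mulr0n; ring.
have Bpos : 0 < B.
  rewrite hB (bigD1 [ffun => false]) //=.
  have w0 : 0 < \prod_j (if [ffun => false] j then 1 - a j else a j :> R).
    apply: prodr_gt0 => j _; rewrite ffunE; exact: powR_gt0.
  have b0 : beta R (Aset [ffun => false]) v = 1.
    rewrite beta_val //; case: ifP => // h; exfalso.
    have A0 : Aset [ffun => false] \subset [set 0 : W kappa].
      by apply/subsetP => x; rewrite inE => /existsP [j]; rewrite ffunE.
    have := subsetP (span_min (@zero_subspace kappa) A0) _ h.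
    by rewrite inE (negbTE v0).
  have rest : 0 <= \sum_(F | F != [ffun => false])
      (\prod_j (if F j then 1 - a j else a j)) * beta R (Aset F) v.
    apply: sumr_ge0 => F _; apply: mulr_ge0.
      apply: prodr_ge0 => j _; case: (F j); have /andP[] := ha j => //.
      by rewrite subr_ge0.
    by rewrite beta_val //; case: ifP.
  rewrite b0; lra.
move=> hle.
have : (E - 1) * B < 0 by rewrite pmulr_llt0 // subr_lt0.
move: hle; rewrite hsum; lra.
Qed.
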